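(* Let $d\ge 1$ and $n,k\ge 0$ be integers. Let $\mathcal{L}_{r\leq d}(n,k)$ (resp. $\mathcal{L}_{c\leq d}(n,k)$) be the set of lonesum $0$-$1$ matrices with $n$ rows and $k$ columns, with no all-zero row and no all-zero column, such that at most $d$ rows (resp. at most $d$ columns) are of the same type, with no restriction on the number of columns (resp. rows) of the same type. Then \begin{align*} |\mathcal{L}_{r\leq d}(n,k)|&=\sum_{m=0}^{\min(n,k)} m!\,S_{\leq d}(n,m)\; m!\,S(k,m),\\ |\mathcal{L}_{c\leq d}(n,k)|&=\sum_{m=0}^{\min(n,k)} m!\,S(n,m)\; m!\,S_{\leq d}(k,m). \end{align*}
   Context: A $0$-$1$ matrix is lonesum if it is uniquely determined by its row sum vector and column sum vector; equivalently, it contains no $2\times 2$ submatrix equal to $\begin{pmatrix}1&0\\0&1\end{pmatrix}$ or $\begin{pmatrix}0&1\\1&0\end{pmatrix}$. Two rows (resp. columns) are of the same type iff they are identical vectors. $S(n,m)$ is the Stirling number of the second kind (number of partitions of an $n$-set into $m$ non-empty blocks), and $S_{\leq d}(n,m)$ is the number of such partitions in which every block has at most $d$ elements (with $S(0,0)=S_{\le d}(0,0)=1$). *)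

(* Defs.v *)
From mathcomp Require Import all_boot all_order all_algebra.
Set Implicit Arguments. Unset Strict Implicit. Unset Printing Implicit Defensive.

Definition rowsum n k (A : 'M[bool]_(n, k)) (i : 'I_n) : nat :=
  \sum_(j < k) nat_of_bool (A i j).
Definition colsum n k (A : 'M[bool]_(n, k)) (j : 'I_k) : nat :=
  \sum_(i < n) nat_of_bool (A i j).

Definition lonesum n k (A : 'M[bool]_(n, k)) : bool :=
  [forall B : 'M[bool]_(n, k),
     ([forall i, rowsum B i == rowsum A i] && [forall j, colsum B j == colsum A j])
     ==> (B == A)].

Definition no_zero_row n k (A : 'M[bool]_(n, k)) : bool :=
  [forall i, exists j, A i j].
Definition no_zero_col n k (A : 'M[bool]_(n, k)) : bool :=
  [forall j, exists i, A i j].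

Definition rows_le n k (d : nat) (A : 'M[bool]_(n, k)) : bool :=
  [forall i, #|[set i' : 'I_n | row i' A == row i A]| <= d].
Definition cols_le n k (d : nat) (A : 'M[bool]_(n, k)) : bool :=
  [forall j, #|[set j' : 'I_k | col j' A == col j A]| <= d].

Definition Lr n k d : {set 'M[bool]_(n, k)} :=
  [set A | [&& lonesum A, no_zero_row A, no_zero_col A & rows_le d A]].
Definition Lc n k d : {set 'M[bool]_(n, k)} :=
  [set A | [&& lonesum A, no_zero_row A, no_zero_col A & cols_le d A]].

Definition stirling2 (n m : nat) : nat :=
  #|[set P : {set {set 'I_n}} | partition P [set: 'I_n] && (#|P| == m)]|.
Definition stirling2_le (d n m : nat) : nat :=
  #|[set P : {set {set 'I_n}} | [&& partition P [set: 'I_n], #|P| == m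
                                   & [forall B in P, #|B| <= d]]]|.

(* Main.v *)
Require Import Defs.
From mathcomp Require Import all_boot all_order all_fingroup all_algebra zify.
Set Implicit Arguments. Unset Strict Implicit. Unset Printing Implicit Defensive.

Section Surj.
Variables (n m d : nat).
Definition surjb (f : {ffun 'I_n -> 'I_m}) := [forall t, exists x, f x == t].
Definition fibd (f : {ffun 'I_n -> 'I_m}) :=
  [forall x, #|[set y | f y == f x]| <= d].
Definition SF := [set f | surjb f && fibd f].
Definition Hf (f : {ffun 'I_n -> 'I_m}) : {ffun 'I_m -> {set 'I_n}} :=
  [ffun t => [set x | f x == t]].
Definition imH (h : {ffun 'I_m -> {set 'I_n}}) := [set h t | t : 'I_m].
Definition PS := [set P : {set {set 'I_n}} | [&& partition P [set: 'I_n],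
   #|P| == m & [forall B in P, #|B| <= d]]].

Lemma Hf_inj : injective Hf.
Proof.
move=> f f' E; apply/ffunP=> x.
have : x \in Hf f' (f x) by rewrite -E ffunE inE.
by rewrite ffunE inE => /eqP.
Qed.

Lemma Hf_injb f : surjb f -> injective (Hf f).
Proof.
move=> /forallP sf t t' E.
have /existsP[x /eqP fx] := sf t.
have : x \in Hf f t' by rewrite -E ffunE inE fx.
by rewrite ffunE inE fx => /eqP.
Qed.

Lemma SF_PS f : f \in SF -> imH (Hf f) \in PS.
Proof.
rewrite inE => /andP[sf /forallP fd].
have inj := Hf_injb sf.
move/forallP: (sf) => sf'.
rewrite inE; apply/and3P; split.
- apply/and3P; split.
  + apply/eqP/setP => x; rewrite inE; apply/bigcupP.
    exists (Hf f (f x)); first exact: imset_f.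
    by rewrite ffunE inE.
  + apply/trivIsetP => _ _ /imsetP[t _ ->] /imsetP[t' _ ->] ne.
    apply/pred0P => x /=; rewrite !ffunE !inE.
    apply/negP => /andP[/eqP-> /eqP E].
    by move: ne; rewrite E eqxx.
  + apply/imsetP => -[t _ E].
    have /existsP[x /eqP fx] := sf' t.
    have : x \in Hf f t by rewrite ffunE inE fx.
    by rewrite -E inE.
- rewrite card_imset // cardT size_enum_ord //.
- apply/forallP => B; apply/implyP => /imsetP[t _ ->].
  have /existsP[x /eqP fx] := sf' t.
  by rewrite ffunE -fx; apply: fd.
Qed.

Lemma card_SF : #|SF| = m`! * #|PS|.
Proof.
rewrite -sum1_card (partition_big (fun f => imH (Hf f)) (mem PS)); last first.
  by move=> f; apply: SF_PS.
rewrite mulnC -sum_nat_const; apply: eq_bigr => P PP.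
rewrite (eq_bigl (mem [set f in SF | imH (Hf f) == P])); last first.
  by move=> f; rewrite !inE.
rewrite sum1_card -(card_imset _ Hf_inj).
have : P \in PS := PP; rewrite inE => /and3P[pP /eqP cardP /forallP bP].
move: pP => /and3P[/eqP cP tP nP].
have -> : Hf @: [set f in SF | imH (Hf f) == P] =
          [set h in ffun_on (mem P) | injectiveb h].
  apply/setP => h; apply/imsetP/idP.
  - move=> [f]; rewrite !inE => /andP[/andP[sf _] /eqP iP] ->.
    apply/andP; split.
      by apply/ffun_onP => t; rewrite -iP; apply: imset_f.
    by apply/injectiveP; apply: Hf_injb.
  - rewrite inE => /andP[/ffun_onP hP /injectiveP hi].
    have iP : imH h = P.
      apply/eqP; rewrite eqEcard; apply/andP; split.
        by apply/subsetP => _ /imsetP[t _ ->]; apply: hP.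
      by rewrite card_imset // cardT size_enum_ord cardP.
    have ex x : exists t, x \in h t.
      have : x \in cover P by rewrite cP.
      move=> /bigcupP[B]; rewrite -iP => /imsetP[t _ ->] xB.
      by exists t.
    pose f := [ffun x => xchoose (ex x)].
    have key x t : (x \in h t) = (f x == t).
      have fP : x \in h (f x) by rewrite /f ffunE; exact: (xchooseP (ex x)).
      apply/idP/eqP => [xt | <-] //.
      apply: hi.
      rewrite -(def_pblock tP (hP t) xt).
      by rewrite -(def_pblock tP (hP (f x)) fP).
    have Hfh : Hf f = h.
      by apply/ffunP => t; apply/setP => x; rewrite ffunE inE key.
    exists f => //.
    rewrite !inE Hfh iP eqxx andbT.
    apply/andP; split.
      apply/forallP => t; apply/existsP.
      have /set0Pn[x xt] : h t != set0.
        by apply: contraNneq nP => <-; apply: hP.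
      by exists x; rewrite -key.
    apply/forallP => x.
    have -> : [set y | f y == f x] = h (f x).
      by apply/setP => y; rewrite inE key.
    by have := bP (h (f x)); rewrite hP.
rewrite card_inj_ffuns_on card_ord.
by rewrite (_ : #|mem P| = m) ?ffactnn.
Qed.

End Surj.

Lemma stirling2_leE d n m : stirling2_le d n m = #|PS n m d|.
Proof. by []. Qed.

Lemma stirling2E n m : stirling2 n m = #|PS n m n|.
Proof.
rewrite /stirling2; apply: eq_card => P; rewrite !inE.
have -> : [forall B in P, #|B| <= n].
  apply/forallP => B; apply/implyP => _.
  by have := max_card (mem B); rewrite card_ord.
by rewrite andbT.
Qed.

Definition mat n k m (f : {ffun 'I_n -> 'I_m}) (g : {ffun 'I_k -> 'I_m})
  : 'M[bool]_(n, k) := \matrix_(i, j) (g j <= f i).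

Lemma pt_leqif (a b : bool) (x y : nat) : a = (y <= x) ->
  b * (2 * x + 1) + a * (2 * y) <= a * (2 * x + 1) + b * (2 * y) ?= iff (a == b).
Proof.
move=> ->; apply/leqifP.
case: b; case: (leqP y x) => h /=; lia.
Qed.

Lemma mat_lonesum n k m f g : lonesum (@mat n k m f g).
Proof.
apply/forallP => B; apply/implyP => /andP[/forallP rB /forallP cB].
set A := mat f g.
pose L (p : 'I_n * 'I_k) := A p.1 p.2 * (2 * f p.1 + 1) + B p.1 p.2 * (2 * g p.2).
pose R (p : 'I_n * 'I_k) := B p.1 p.2 * (2 * f p.1 + 1) + A p.1 p.2 * (2 * g p.2).
have le := @leqif_sum _ predT (fun p => A p.1 p.2 == B p.1 p.2) R L
   (fun p _ => @pt_leqif (A p.1 p.2) (B p.1 p.2) (f p.1) (g p.2) (mxE _ _ _ _)).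
have eLR : \sum_p R p = \sum_p L p.
  rewrite /R /L.
  rewrite -(pair_bigA _ (fun i j => B i j * (2 * f i + 1) + A i j * (2 * g j))).
  rewrite -(pair_bigA _ (fun i j => A i j * (2 * f i + 1) + B i j * (2 * g j))).
  rewrite /=.
  under eq_bigr => i _ do rewrite big_split /=.
  under [in RHS]eq_bigr => i _ do rewrite big_split /=.
  rewrite !big_split /=.
  congr (_ + _).
    apply: eq_bigr => i _; rewrite -!big_distrl /=.
    by move: (rB i); rewrite /rowsum => /eqP->.
  rewrite (exchange_big _ _ _ _ _ (fun i j => A i j * _)).
  rewrite (exchange_big _ _ _ _ _ (fun i j => B i j * _)) /=.
  apply: eq_bigr => j _; rewrite -!big_distrl /=.
  by move: (cB j); rewrite /colsum => /eqP->.
move: le => [_]; rewrite eLR eqxx => /esym/forallP H.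
by apply/eqP/matrixP => i j; move: (H (i, j)) => /= /eqP.
Qed.

Definition subr k (u v : 'rV[bool]_k) := [forall j, u ord0 j ==> v ord0 j].
Definition ltr k (u v : 'rV[bool]_k) := (u != v) && subr u v.
Definition rowvec k m (g : {ffun 'I_k -> 'I_m}) (t : 'I_m) : 'rV[bool]_k :=
  \row_j (g j <= t).
Definition TT n k (A : 'M[bool]_(n, k)) := [set row i A | i : 'I_n].
Definition rho n k (A : 'M[bool]_(n, k)) (u : 'rV[bool]_k) :=
  #|[set v in TT A | ltr v u]|.
Definition gam n k (A : 'M[bool]_(n, k)) (j : 'I_k) :=
  #|[set v in TT A | ~~ v ord0 j]|.

Lemma card_lt_ord m x : x <= m -> #|[set s : 'I_m | s < x]| = x.
Proof.
move=> le.
have -> : [set s : 'I_m | s < x] = [set widen_ord le s | s : 'I_x].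
  apply/setP => s; rewrite inE; apply/idP/imsetP => [lt | [s' _ ->]].
    by exists (Ordinal lt) => //; apply: val_inj.
  by rewrite /= ltn_ord.
rewrite card_imset ?card_ord //.
by move=> a b /(congr1 val) /= E; apply: val_inj.
Qed.

Lemma surj_le n m (f : {ffun 'I_n -> 'I_m}) : surjb f -> m <= n.
Proof.
move=> /forallP sf.
have -> : m = #|[set f i | i : 'I_n]|.
  rewrite -{1}(card_ord m); apply: eq_card => t.
  have /existsP[x /eqP <-] := sf t.
  by rewrite imset_f.
by apply: leq_trans (leq_imset_card _ _) _; rewrite cardT size_enum_ord.
Qed.

Section MatS.
Variables (n k m : nat) (f : {ffun 'I_n -> 'I_m}) (g : {ffun 'I_k -> 'I_m}).
Hypotheses (sf : surjb f) (sg : surjb g).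

Lemma row_mat i : row i (mat f g) = rowvec g (f i).
Proof. by apply/rowP => j; rewrite !mxE. Qed.

Lemma subr_rowvec s t : subr (rowvec g s) (rowvec g t) = (s <= t).
Proof.
apply/forallP/idP => [H | le j].
  have /existsP[j /eqP gj] := (forallP sg) s.
  by move: (H j); rewrite !mxE gj leqnn.
by rewrite !mxE; apply/implyP => h; apply: leq_trans h le.
Qed.

Lemma rowvec_inj : injective (rowvec g).
Proof.
move=> s t E; apply: val_inj; apply/eqP; rewrite eqn_leq -!subr_rowvec E.
by rewrite /subr; apply/andP; split; apply/forallP => j; apply/implyP.
Qed.

Lemma ltr_rowvec s t : ltr (rowvec g s) (rowvec g t) = (s < t).
Proof. by rewrite /ltr subr_rowvec (inj_eq rowvec_inj) ltn_neqAle. Qed.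

Lemma TT_mat : TT (mat f g) = [set rowvec g t | t : 'I_m].
Proof.
apply/setP => u; apply/imsetP/imsetP => [[i _ ->] | [t _ ->]].
  by exists (f i) => //; rewrite row_mat.
have /existsP[i /eqP fi] := (forallP sf) t.
by exists i => //; rewrite row_mat fi.
Qed.

Lemma card_TT_mat : #|TT (mat f g)| = m.
Proof. by rewrite TT_mat card_imset ?cardT ?size_enum_ord //; apply: rowvec_inj. Qed.

Lemma rho_mat i : rho (mat f g) (row i (mat f g)) = f i.
Proof.
rewrite /rho row_mat TT_mat.
have -> : [set v in [set rowvec g t | t : 'I_m] | ltr v (rowvec g (f i))] =
          rowvec g @: [set s : 'I_m | s < f i].
  apply/setP => v; apply/idP/imsetP.
    rewrite inE => /andP[/imsetP[t _ ->]]; rewrite ltr_rowvec => lt.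
    by exists t; rewrite ?inE.
  move=> [t]; rewrite inE => lt ->.
  by rewrite inE imset_f //= ltr_rowvec.
by rewrite card_imset ?card_lt_ord //; [apply: ltnW | apply: rowvec_inj].
Qed.

Lemma gam_mat j : gam (mat f g) j = g j.
Proof.
rewrite /gam TT_mat.
have -> : [set v in [set rowvec g t | t : 'I_m] | ~~ v ord0 j] =
          rowvec g @: [set s : 'I_m | s < g j].
  apply/setP => v; apply/idP/imsetP.
    rewrite inE => /andP[/imsetP[t _ ->]]; rewrite mxE -ltnNge => lt.
    by exists t; rewrite ?inE.
  move=> [t]; rewrite inE => lt ->.
  by rewrite inE imset_f //= mxE -ltnNge.
by rewrite card_imset ?card_lt_ord //; [apply: ltnW | apply: rowvec_inj].
Qed.

Lemma mat_in_Lr d : fibd d f -> mat f g \in Lr n k d.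
Proof.
move=> /forallP fd.
rewrite inE mat_lonesum /=; apply/and3P; split.
- apply/forallP => i; have /existsP[j /eqP gj] := (forallP sg) (f i).
  by apply/existsP; exists j; rewrite mxE gj.
- apply/forallP => j; have /existsP[i /eqP fi] := (forallP sf) (g j).
  by apply/existsP; exists i; rewrite mxE fi.
- apply/forallP => i.
  have -> : [set i' | row i' (mat f g) == row i (mat f g)] = [set y | f y == f i].
    by apply/setP => y; rewrite !inE !row_mat (inj_eq rowvec_inj).
  exact: fd.
Qed.

End MatS.

Lemma mat_inj n k m (f f' : {ffun 'I_n -> 'I_m}) (g g' : {ffun 'I_k -> 'I_m}) :
  surjb f -> surjb g -> surjb f' -> surjb g' ->
  mat f g = mat f' g' -> f = f' /\ g = g'.
Proof.
move=> sf sg sf' sg' E; split.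
  apply/ffunP => i; apply: ord_inj.
  by rewrite -(rho_mat sf sg) -(rho_mat sf' sg') E.
apply/ffunP => j; apply: ord_inj.
by rewrite -(gam_mat sf sg) -(gam_mat sf' sg') E.
Qed.

Lemma sum2 k (j1 j2 : 'I_k) (F : 'I_k -> nat) : j1 != j2 ->
  \sum_(j | (j == j1) || (j == j2)) F j = F j1 + F j2.
Proof.
move=> ne; rewrite (bigD1 j1) ?eqxx //; congr (_ + _).
apply: big_pred1 => j /=.
case: (eqVneq j j1) => [->|] /=; last by rewrite andbT.
by rewrite (negbTE ne).
Qed.

Lemma nosw n k (A : 'M[bool]_(n, k)) i1 i2 j1 j2 : lonesum A ->
  A i1 j1 -> A i2 j2 -> ~~ A i1 j2 -> ~~ A i2 j1 -> False.
Proof.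
move=> /forallP ls a11 a22 a12 a21.
have ne : j1 != j2 by apply: contraNneq a12 => <-.
pose S := fun j : 'I_k => (j == j1) || (j == j2).
pose B : 'M[bool]_(n, k) := (\matrix_(i, j) (if S j then A (tperm i1 i2 i) j else A i j))%R.
have hS i : (i == i1) || (i == i2) -> \sum_(j | S j) nat_of_bool (A i j) = 1.
  rewrite /S sum2 //.
  by case/orP => /eqP ->; rewrite ?(negbTE a12) ?(negbTE a21) ?a11 ?a22.
have := ls B; rewrite /= => /implyP H.
have : B == A.
  apply: H; apply/andP; split; apply/forallP => x.
    rewrite /rowsum (bigID S) [in X in _ == X](bigID S) /=.
    rewrite (eq_bigr (fun j => nat_of_bool (A (tperm i1 i2 x) j))); last first.
      by move=> j Sj; rewrite mxE Sj.
    rewrite [X in _ + X == _](eq_bigr (fun j => nat_of_bool (A x j))); last first.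
      by move=> j Sj; rewrite mxE (negbTE Sj).
    case: tpermP => [E|E|_ _] //.
      by rewrite hS ?eqxx ?orbT // hS // E eqxx.
    by rewrite hS ?eqxx ?orbT // hS // E eqxx ?orbT.
  rewrite /colsum; case Sx: (S x).
    rewrite (eq_bigr (fun i => nat_of_bool (A (tperm i1 i2 i) x))); last first.
      by move=> i _; rewrite mxE Sx.
    by apply/eqP; rewrite [RHS](reindex_inj (@perm_inj _ (tperm i1 i2))).
  by apply/eqP; apply: eq_bigr => i _; rewrite mxE Sx.
move/eqP/matrixP => /(_ i1 j1); rewrite mxE /S eqxx /= tpermL.
by move: a21 a11 => /negbTE -> ->.
Qed.

Lemma subr_trans k (u v w : 'rV[bool]_k) : subr u v -> subr v w -> subr u w.
Proof.
move=> /forallP h1 /forallP h2; apply/forallP => j; apply/implyP => a.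
by apply: (implyP (h2 j)); apply: (implyP (h1 j)).
Qed.

Lemma subr_anti k (u v : 'rV[bool]_k) : subr u v -> subr v u -> u = v.
Proof.
move=> /forallP h1 /forallP h2; apply/rowP => j.
by move: (h1 j) (h2 j); case: (u ord0 j); case: (v ord0 j).
Qed.

Lemma ltr_trans k (u v w : 'rV[bool]_k) : ltr u v -> ltr v w -> ltr u w.
Proof.
move=> /andP[n1 s1] /andP[n2 s2]; apply/andP; split; last exact: subr_trans s1 s2.
apply/eqP => E; subst w.
by move: n1; rewrite (subr_anti s1 s2) eqxx.
Qed.

Lemma ltrr k (u : 'rV[bool]_k) : ltr u u = false.
Proof. by rewrite /ltr eqxx. Qed.

Lemma Lr_mat n k d (A : 'M[bool]_(n, k)) m : A \in Lr n k d -> #|TT A| = m ->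
  exists f : {ffun 'I_n -> 'I_m}, exists g : {ffun 'I_k -> 'I_m},
    [/\ surjb f, surjb g, fibd d f & A = mat f g].
Proof.
rewrite inE => /and4P[ls /forallP nzr /forallP nzc /forallP rl] Em; subst m.
set T := TT A.
have rowE i j : (row i A) ord0 j = A i j by rewrite mxE.
have chain0 i i' : subr (row i A) (row i' A) || subr (row i' A) (row i A).
  case: (boolP (subr (row i A) (row i' A))) => //= h1.
  apply/negPn/negP => h2.
  move: h1 h2; rewrite /subr !negb_forall => /existsP[j1] h1 /existsP[j2] h2.
  move: h1 h2; rewrite !negb_imply !rowE => /andP[a1 b1] /andP[a2 b2].
  exact: (nosw ls a1 a2 b2 b1).
have chain u v : u \in T -> v \in T -> subr u v || subr v u.
  by move=> /imsetP[i _ ->] /imsetP[i' _ ->].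
have memT i : row i A \in T by apply: imset_f.
have rho_lt u : u \in T -> rho A u < #|T|.
  move=> uT; apply: proper_card; apply/properP; split.
    by apply/subsetP => v; rewrite inE => /andP[].
  by exists u => //; rewrite inE ltrr andbF.
have rho_mono u v : u \in T -> v \in T -> ltr u v -> rho A u < rho A v.
  move=> uT vT uv; apply: proper_card; apply/properP; split.
    apply/subsetP => w; rewrite !inE => /andP[-> wu] /=.
    exact: ltr_trans wu uv.
  by exists u; rewrite !inE ?uT ?ltrr ?andbF.
have rho_inj : {in T &, injective (rho A)}.
  move=> u v uT vT E; apply/eqP/negPn/negP => ne.
  case/orP: (chain u v uT vT) => h.
    by have := rho_mono u v uT vT; rewrite /ltr ne h E ltnn => /(_ isT).
  by have := rho_mono v u vT uT; rewrite /ltr eq_sym ne h E ltnn => /(_ isT).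
have gam_lt j : gam A j < #|T|.
  have /existsP[i aij] := nzc j.
  apply: proper_card; apply/properP; split.
    by apply/subsetP => v; rewrite inE => /andP[].
  by exists (row i A) => //; rewrite inE rowE aij andbF.
have key i j : A i j = (gam A j <= rho A (row i A)).
  case aij: (A i j); apply/esym.
    apply: subset_leq_card; apply/subsetP => v; rewrite !inE => /andP[vT nv].
    rewrite vT /=; move: (chain v (row i A) vT (memT i)).
    case/orP => h.
      apply/andP; split => //; apply: contraNneq nv => ->.
      by rewrite rowE.
    by move: (forallP h j); rewrite rowE aij /= (negbTE nv).
  apply/negbTE; rewrite -ltnNge; apply: proper_card; apply/properP; split.
    apply/subsetP => w; rewrite !inE => /andP[-> /andP[_ /forallP h]] /=.
    by apply: contraFN aij => wj; rewrite -rowE; apply: (implyP (h j)).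
  by exists (row i A); rewrite !inE ?memT ?rowE ?aij ?ltrr ?andbF.
pose f := [ffun i => Ordinal (rho_lt _ (memT i))].
pose g := [ffun j => Ordinal (gam_lt j)].
have fE i : (f i : nat) = rho A (row i A) by rewrite ffunE.
have gE j : (g j : nat) = gam A j by rewrite ffunE.
have Amat : A = mat f g.
  by apply/matrixP => i j; rewrite mxE fE gE key.
have sf : surjb f.
  apply/forallP => t; apply/existsP.
  pose h := fun u => insubd t (rho A u) : 'I_#|T|.
  have hE u : u \in T -> (h u : nat) = rho A u.
    by move=> uT; rewrite val_insubd rho_lt.
  have fh : [set f i | i : 'I_n] = h @: T.
    rewrite /T /TT -imset_comp; apply: eq_imset => i /=.
    by apply: ord_inj; rewrite fE hE.
  have : [set f i | i : 'I_n] == [set: 'I_#|T|].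
    rewrite eqEcard subsetT cardsT card_ord fh card_in_imset ?leqnn //.
    move=> u v uT vT /(congr1 (@nat_of_ord _)); rewrite !hE // => E.
    exact: rho_inj.
  move=> /eqP; rewrite -/T => E'.
  have : t \in [set f i | i : 'I_n] by rewrite E' inE.
  by move=> /imsetP[i _ ->]; exists i.
have fEq i i' : (f i == f i') = (row i A == row i' A).
  apply/eqP/eqP => [E | E]; last by apply: ord_inj; rewrite !fE E.
  apply: rho_inj; rewrite ?memT //.
  by rewrite -!fE E.
have sg : surjb g.
  apply/forallP => t; apply/existsP.
  have /existsP[i /eqP fi] := (forallP sf) t.
  case Et: (val t) => [|s].
    have /existsP[j aij] := nzr i.
    exists j; apply/eqP; apply: ord_inj; move: aij; rewrite key -fE -gE fi Et.
    by rewrite leqn0 => /eqP ->.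
  have ls' : s < #|T| by have := ltn_ord t; rewrite Et => /ltnW.
  have /existsP[i' /eqP fi'] := (forallP sf) (Ordinal ls').
  have : row i A != row i' A.
    rewrite -fEq fi fi'; apply/eqP => /(congr1 (@nat_of_ord _)) /=; rewrite Et.
    by move=> H; lia.
  move=> nr.
  have [j nj] : exists j, A i j != A i' j.
    apply/existsP; move: nr; apply: contraR; rewrite negb_exists => /forallP H.
    by apply/eqP/rowP => j; rewrite !rowE; apply/eqP; move: (H j); rewrite negbK.
  exists j; apply/eqP; apply: ord_inj; move: nj.
  rewrite !key -!fE fi fi' Et /= gE; move: (gam A j) => x.
  case: (leqP x s) => h1; case: (leqP x s.+1) => h2 //= _; lia.
exists f, g; split => //.
apply/forallP => x.
have -> : [set y | f y == f x] = [set i' | row i' A == row x A].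
  by apply/setP => y; rewrite !inE fEq.
exact: rl.
Qed.

Lemma rk_le n k d (A : 'M[bool]_(n, k)) : A \in Lr n k d -> #|TT A| <= minn n k.
Proof.
move=> AL; have [f [g [sf sg _ _]]] := Lr_mat AL (erefl _).
by rewrite leq_min (surj_le sf) (surj_le sg).
Qed.

Lemma card_Lr n k d : #|Lr n k d| =
  \sum_(m < (minn n k).+1) #|SF n m d| * #|SF k m k|.
Proof.
rewrite -sum1_card (partition_big (fun A => (inord #|TT A| : 'I_(minn n k).+1)) xpredT) //.
apply: eq_bigr => m _.
rewrite -cardsX.
pose M := fun p : {ffun 'I_n -> 'I_m} * {ffun 'I_k -> 'I_m} => mat p.1 p.2.
rewrite -(@card_in_imset _ _ M); last first.
  move=> [f g] [f' g'] /setXP[fS gS] /setXP[fS' gS'] /= E.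
  move: fS gS fS' gS'; rewrite /SF !inE /=.
  move=> /andP[sf _] /andP[sg _] /andP[sf' _] /andP[sg' _].
  by have [-> ->] := mat_inj sf sg sf' sg' E.
rewrite -sum1_card; apply: eq_bigl => A.
apply/andP/imsetP => [[AL /eqP Em] | [[f g]]].
  have Em' : #|TT A| = m.
    by rewrite -Em inordK // ltnS; apply: rk_le AL.
  have [f [g [sf sg fd ->]]] := Lr_mat AL Em'.
  exists (f, g) => //; apply/setXP; rewrite /SF !inE /= sf sg fd; split => //.
  apply/forallP => x; by have := max_card (mem [set y | g y == g x]); rewrite card_ord.
move=> /setXP[]; rewrite /SF !inE /= => /andP[sf fd] /andP[sg _] -> /=.
split; first by have := mat_in_Lr sf sg fd; rewrite inE.
by rewrite /M /= card_TT_mat // inord_val.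
Qed.

Lemma rowsum_tr n k (A : 'M[bool]_(n, k)) i : rowsum (trmx A) i = colsum A i.
Proof. by apply: eq_bigr => j _; rewrite mxE. Qed.
Lemma colsum_tr n k (A : 'M[bool]_(n, k)) j : colsum (trmx A) j = rowsum A j.
Proof. by apply: eq_bigr => i _; rewrite mxE. Qed.

Lemma lonesum_tr n k (A : 'M[bool]_(n, k)) : lonesum A -> lonesum (trmx A).
Proof.
move=> /forallP ls; apply/forallP => B; apply/implyP => /andP[/forallP rB /forallP cB].
have /implyP H := ls (trmx B).
have : (trmx B) == A.
  apply: H; apply/andP; split; apply/forallP => x.
    by rewrite rowsum_tr -colsum_tr.
  by rewrite colsum_tr -rowsum_tr.
by move/eqP => <-; rewrite trmxK.
Qed.

Lemma Lc_Lr n k d (A : 'M[bool]_(n, k)) : (A \in Lc n k d) = ((trmx A) \in Lr k n d).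
Proof.
rewrite !inE.
have -> : lonesum (trmx A) = lonesum A.
  by apply/idP/idP => [/lonesum_tr|]; [rewrite trmxK | apply: lonesum_tr].
have -> : no_zero_row (trmx A) = no_zero_col A.
  by apply: eq_forallb => j; apply: eq_existsb => i; rewrite mxE.
have -> : no_zero_col (trmx A) = no_zero_row A.
  by apply: eq_forallb => j; apply: eq_existsb => i; rewrite mxE.
have -> : rows_le d (trmx A) = cols_le d A.
  apply: eq_forallb => j; congr (_ <= d); apply: eq_card => j'.
  by rewrite !inE -!tr_col (inj_eq (@trmx_inj _ _ _)).
by congr (_ && _); rewrite !andbA [no_zero_row A && _]andbC.
Qed.

Lemma card_Lc n k d : #|Lc n k d| = #|Lr k n d|.
Proof.
rewrite -(card_imset _ (@trmx_inj _ _ _)); apply: eq_card => B.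
apply/imsetP/idP => [[A AL ->] | BL].
  by rewrite -Lc_Lr.
by exists (trmx B); rewrite ?trmxK // Lc_Lr trmxK.
Qed.

Theorem corollary1 (d n k : nat) : 1 <= d ->
  #|Lr n k d| = \sum_(m < (minn n k).+1)
                   m`! * stirling2_le d n m * (m`! * stirling2 k m) /\
  #|Lc n k d| = \sum_(m < (minn n k).+1)
                   m`! * stirling2 n m * (m`! * stirling2_le d k m).
Proof.
move=> _; split.
  rewrite card_Lr; apply: eq_bigr => m _.
  by rewrite !card_SF -stirling2_leE -stirling2E.
rewrite card_Lc card_Lr minnC; apply: eq_bigr => m _.
by rewrite !card_SF -stirling2_leE -stirling2E mulnC.
Qed.
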